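(* There exists a $CS(3,K_4^{(3)}+e,gn+1)$ of type $(g^n:1)$ for each $(g,n)\in\{(5,3),(5,5),(6,4),(10,2)\}$.
   Context: $K_4^{(3)}+e$ denotes the 3-uniform hypergraph with vertex set $\{1,2,3,4,5\}$ and edge set $\{\{1,2,3\},\{1,2,4\},\{1,3,4\},\{2,3,4\},\{3,4,5\}\}$. A $CS(3,K_4^{(3)}+e,gn+s)$ of type $(g^n:s)$ is a quadruple $(X,S,\mathcal{T},\mathcal{A})$ where $|X|=gn+s$, $S\subseteq X$ with $|S|=s$ (the stem), $\mathcal{T}=\{G_1,\dots,G_n\}$ is a partition of $X\setminus S$ into $n$ groups of size $g$, and $\mathcal{A}$ is a collection of hypergraphs on subsets of $X$ (blocks), each isomorphic to $K_4^{(3)}+e$, such that every 3-subset $T\subseteq X$ with $|T\cap(S\cup G_i)|<3$ for all $i$ is an edge of exactly one block, and no 3-subset of any $S\cup G_i$ is an edge of any block. Here $s=1$. *)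

(* Defs.v *)
From mathcomp Require Import all_boot.
Set Implicit Arguments. Unset Strict Implicit. Unset Printing Implicit Defensive.

(* Vertices 1..5 of the paper are 0..4 here. *)
Definition v5 (k : nat) : 'I_5 := inord k.

Definition K4e_edges : {set {set 'I_5}} :=
  [set [set v5 0; v5 1; v5 2]; [set v5 0; v5 1; v5 3];
       [set v5 0; v5 2; v5 3]; [set v5 1; v5 2; v5 3];
       [set v5 2; v5 3; v5 4]].

Definition is_K4e_block (T : finType) (B : {set {set T}}) : Prop :=
  exists f : 'I_5 -> T, injective f /\ B = [set f @: E | E : {set 'I_5} in K4e_edges].

Definition CS_K4e (T : finType) (g n s : nat) : Prop :=
  #|T| = g * n + s /\
  exists (S : {set T}) (G : {set {set T}}) (A : seq {set {set T}}),
    [/\ #|S| = s,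
        partition G (~: S),
        #|G| = n &
        (forall Gi, Gi \in G -> #|Gi| = g)] /\
    [/\ (forall B, B \in A -> is_K4e_block B),
        (forall t : {set T}, #|t| = 3 ->
           (forall Gi, Gi \in G -> #|t :&: (S :|: Gi)| < 3) ->
           count (fun B : {set {set T}} => t \in B) A = 1) &
        (forall t : {set T}, #|t| = 3 ->
           (exists2 Gi, Gi \in G & t \subset S :|: Gi) ->
           forall B, B \in A -> t \notin B)].

(* Main.v *)
Require Import Defs.
From mathcomp Require Import all_boot.
Set Implicit Arguments. Unset Strict Implicit. Unset Printing Implicit Defensive.

Lemma card_set_ord v (P : pred nat) : #|[set x : 'I_v | P x]| = count P (iota 0 v).
Proof.
rewrite cardsE cardE -val_enum_ord count_map -size_filter /enum_mem -filter_predI.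
congr size; apply: eq_filter => x; by rewrite /= !unfold_in /= andbT.
Qed.

Definition edges_nat : seq (seq nat) :=
  [:: [:: 0; 1; 2]; [:: 0; 1; 3]; [:: 0; 2; 3]; [:: 1; 2; 3]; [:: 2; 3; 4]].

Definition inside_l (g n : nat) (l : seq nat) : bool :=
  has (fun r => all (fun x => (x == g * n) || (x %% n == r)) l) (iota 0 n).

Definition hit_l (l : seq nat) (s : seq nat) : bool :=
  has (fun e => all (fun i => nth 0 s i \in l) e) edges_nat.

Definition Q (g n : nat) (A : seq (seq nat)) (l : seq nat) : bool :=
  count (hit_l l) A == (if inside_l g n l then 0 else 1).

Definition check_all (g n : nat) (A : seq (seq nat)) : bool :=
  [&& all (fun s => [&& size s == 5, uniq s & all (fun x => x < g * n + 1) s]) A,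
      all (fun r => count (fun x => (x < g * n) && (x %% n == r)) (iota 0 (g * n + 1)) == g)
          (iota 0 n) &
      all (fun c => all (fun b => all (fun a => Q g n A [:: a; b; c]) (iota 0 b)) (iota 0 c))
          (iota 0 (g * n + 1))].

Lemma Q_eq g n A l1 l2 : l1 =i l2 -> Q g n A l1 = Q g n A l2.
Proof.
move=> E; rewrite /Q /inside_l.
have -> : count (hit_l l1) A = count (hit_l l2) A.
  apply: eq_count => s; rewrite /hit_l; apply: eq_has => e; apply: eq_all => i.
  by rewrite E.
by rewrite (eq_has (a2 := fun r => all (fun x => (x == g * n) || (x %% n == r)) l2)) //
  => r; apply: eq_all_r.
Qed.

Lemma sort3 (x y z : nat) : uniq [:: x; y; z] ->
  exists a b c, [/\ a < b, b < c & [:: a; b; c] =i [:: x; y; z]].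
Proof.
move=> U.
have P : perm_eq (sort leq [:: x; y; z]) [:: x; y; z] by rewrite perm_sort.
have S := sort_sorted leq_total [:: x; y; z].
have U' : uniq (sort leq [:: x; y; z]) by rewrite (perm_uniq P).
have Sz : size (sort leq [:: x; y; z]) = 3 by rewrite size_sort.
move: P S U' Sz; case: (sort leq [:: x; y; z]) => [|a [|b [|c [|d l]]]] //= P S U' _.
move: S U'; rewrite /= !inE !negb_or andbT => /andP [ab bc] /and3P [/andP [nab nac] nbc _].
exists a, b, c; split.
- by rewrite ltn_neqAle nab.
- by rewrite ltn_neqAle nbc.
- by apply: perm_mem.
Qed.

Lemma infP g n : g * n < g * n + 1. Proof. by rewrite addn1. Qed.
Definition inf g n : 'I_(g * n + 1) := Ordinal (infP g n).
Definition grp g n (r : nat) : {set 'I_(g * n + 1)} :=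
  [set x : 'I_(g * n + 1) | (x < g * n) && (x %% n == r)].
Definition mkf g n (s : seq nat) : 'I_5 -> 'I_(g * n + 1) :=
  fun i => insubd (inf g n) (nth 0 s i).
Definition Bof g n (s : seq nat) : {set {set 'I_(g * n + 1)}} :=
  [set mkf g n s @: E | E : {set 'I_5} in K4e_edges].
Definition valid g n (s : seq nat) : bool :=
  [&& size s == 5, uniq s & all (fun x => x < g * n + 1) s].

Lemma val_mkf g n s i : valid g n s -> val (mkf g n s i) = nth 0 s i.
Proof.
case/and3P => _ _ /allP Hs; rewrite /mkf val_insubd.
case: (ltnP i (size s)) => [lt|ge]; first by rewrite Hs // mem_nth.
rewrite nth_default //; case: ifP => // h; exfalso; move: h; by rewrite addn1.
Qed.

Lemma mkf_inj g n s : valid g n s -> injective (mkf g n s).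
Proof.
move=> V i j /(congr1 val); rewrite !val_mkf // => /eqP.
case/and3P: V => /eqP sz U _.
by rewrite nth_uniq ?sz // => /eqP E; apply: val_inj.
Qed.

Lemma v5K i : i < 5 -> val (v5 i) = i.
Proof. by move=> h; exact: inordK. Qed.

Lemma set3E (T : finType) (p q r : T) : [set p; q; r] = p |: (q |: [set r]).
Proof. by apply/setP => x; rewrite !inE orbA. Qed.

Lemma card3 (T : finType) (p q r : T) : p != q -> q != r -> p != r ->
  #|[set p; q; r]| = 3.
Proof.
move=> pq qr pr; rewrite set3E !cardsU1 cards1 !inE negb_or pq pr qr.
by [].
Qed.

Lemma eq3 (T : finType) (t : {set T}) p q r : #|t| = 3 -> p != q -> q != r -> p != r ->
  (t == [set p; q; r]) = [&& p \in t, q \in t & r \in t].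
Proof.
move=> ht pq qr pr; rewrite eq_sym eqEcard card3 // ht leqnn andbT.
apply/subsetP/and3P => [H|[hp hq hr] x].
  by split; apply: H; rewrite !inE eqxx ?orbT.
by rewrite !inE => /orP [/orP [] | ] /eqP ->.
Qed.

Lemma mem_set3 v (x a b c : 'I_v) :
  (x \in [set a; b; c]) = (val x \in [:: val a; val b; val c]).
Proof. by rewrite !inE -!val_eqE /= orbA. Qed.

Lemma eqm g n s (a b c : 'I_(g * n + 1)) i j k :
  valid g n s -> uniq [:: a; b; c] -> i < 5 -> j < 5 -> k < 5 -> uniq [:: i; j; k] ->
  ([set a; b; c] == [set mkf g n s (v5 i); mkf g n s (v5 j); mkf g n s (v5 k)]) =
  all (fun x => nth 0 s x \in [:: val a; val b; val c]) [:: i; j; k].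
Proof.
move=> V U hi hj hk Uijk.
have ne x y : x < 5 -> y < 5 -> x != y -> mkf g n s (v5 x) != mkf g n s (v5 y).
  move=> hx hy nxy; rewrite (inj_eq (mkf_inj V)) -val_eqE !v5K //.
move: Uijk; rewrite /= !inE !negb_or andbT => /andP [/andP [nij nik] njk].
move: U; rewrite /= !inE !negb_or andbT => /andP [/andP [nab nac] nbc].
rewrite eq3 ?ne // ?card3 //.
by rewrite !mem_set3 !val_mkf // !v5K // !inE andbT.
Qed.

Lemma mem_Bof g n s (a b c : 'I_(g * n + 1)) : valid g n s -> uniq [:: a; b; c] ->
  ([set a; b; c] \in Bof g n s) = hit_l [:: val a; val b; val c] s.
Proof.
move=> V U.
rewrite /Bof /K4e_edges !imsetU !imset_set1 !inE.
rewrite !imsetU !imset_set1 !eqm //.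
by rewrite /hit_l /= !andbT orbF !orbA.
Qed.

Lemma card3_ex (T : finType) (t : {set T}) : #|t| = 3 ->
  exists a b c, uniq [:: a; b; c] /\ t = [set a; b; c].
Proof.
move=> ht; have : 2 < #|t| by rewrite ht.
case/card_gt2P => x [y [z [[hx hy hz] [xy yz zx]]]].
exists x, y, z; split.
  by rewrite /= !inE negb_or xy eq_sym zx yz.
by apply/eqP; rewrite eq3 // ?hx ?hy ?hz // eq_sym.
Qed.

Lemma CS_of_check g n A : 0 < g -> 0 < n -> check_all g n A ->
  CS_K4e 'I_(g * n + 1) g n 1.
Proof.
move=> g0 n0 /and3P [HA HG HQ].
split; first by rewrite card_ord.
pose S := [set inf g n].
pose G := [set grp g n r | r : 'I_n].
exists S, G, (map (Bof g n) A).
have memS x : (x \in S) = (val x == g * n) by rewrite inE -val_eqE.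
have memG x r : (x \in grp g n r) = (val x < g * n) && (val x %% n == r) by rewrite inE.
have ltv (x : 'I_(g * n + 1)) : val x <= g * n by case: x => x /= hx; rewrite -ltnS -[(g * n).+1]addn1.
have memSG x r : (x \in S :|: grp g n r) = (val x == g * n) || (val x %% n == r).
  rewrite in_setU memS memG ltn_neqAle ltv andbT. by case: eqP.
have nlegn : n <= g * n by rewrite leq_pmull.
have rlt (r : 'I_n) : r < g * n + 1.
  by rewrite (leq_trans (ltn_ord r)) // (leq_trans nlegn) // leq_addr.
have rmem (r : 'I_n) : Ordinal (rlt r) \in grp g n r.
  by rewrite memG /= modn_small // (leq_trans (ltn_ord r) nlegn) eqxx.
have grp_inj : injective (fun r : 'I_n => grp g n r).
  move=> r r' /= E; have := rmem r; rewrite E memG /= modn_small //.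
  by case/andP => _ /eqP h; apply: val_inj.
have cardg (r : 'I_n) : #|grp g n r| = g.
  rewrite /grp (card_set_ord _ (fun x => (x < g * n) && (x %% n == r))); apply/eqP.
  by move/allP: HG; apply; rewrite mem_iota /=.
have n0G : set0 \notin G.
  by apply/imsetP => [[r _ /setP /(_ (Ordinal (rlt r)))]]; rewrite rmem inE.
split.
- split.
  + by rewrite cards1.
  + rewrite /partition; apply/and3P; split => //.
    * rewrite cover_imset; apply/eqP/setP => x; rewrite in_setC memS.
      apply/bigcupP/idP.
      - case=> r _; rewrite memG => /andP [lt _]; by rewrite neq_ltn lt.
      - move=> nx; exists (Ordinal (ltn_pmod x n0)) => //.
        by rewrite memG /= eqxx andbT ltn_neqAle nx ltv.
    * have [] // := trivIimset (J := predT) (F := fun r : 'I_n => grp g n r).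
      move=> r r' _ _ ne; rewrite -setI_eq0; apply/eqP/setP => x.
      rewrite !inE; apply/negP => /andP [/andP [_ /eqP h1] /andP [_ /eqP h2]].
      by move: ne; rewrite -val_eqE /= -h1 -h2 eqxx.
  + by rewrite card_imset // card_ord.
  + by move=> Gi /imsetP [r _ ->].
-
  have key (t : {set 'I_(g * n + 1)}) : #|t| = 3 -> exists a b c : 'I_(g * n + 1),
      [/\ uniq [:: a; b; c], t = [set a; b; c] &
          Q g n A [:: val a; val b; val c]].
    case/card3_ex => a [b [c [U ->]]]; exists a, b, c; split => //.
    have Ul : uniq (map val [:: a; b; c]) by rewrite (map_inj_uniq val_inj).
    have [a' [b' [c' [ab bc E]]]] := sort3 Ul.
    rewrite -(Q_eq g n A E).
    have cv : c' < g * n + 1.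
      have : c' \in [:: val a; val b; val c] by rewrite -E !inE eqxx ?orbT.
      by rewrite !inE => /or3P [] /eqP ->; apply: ltn_ord.
    move/allP: HQ => /(_ c'); rewrite mem_iota /= cv => /(_ isT) /allP /(_ b').
    rewrite mem_iota /= bc => /(_ isT) /allP /(_ a').
    by rewrite mem_iota /= ab => /(_ isT).
  have cnt (a b c : 'I_(g * n + 1)) : uniq [:: a; b; c] ->
      count (fun B : {set {set 'I_(g * n + 1)}} => [set a; b; c] \in B) (map (Bof g n) A) =
      count (hit_l [:: val a; val b; val c]) A.
    move=> U; rewrite count_map; apply: eq_in_count => s sA /=.
    by rewrite mem_Bof //; exact: (allP HA s sA).
  have sub (a b c : 'I_(g * n + 1)) (r : nat) : ([set a; b; c] \subset S :|: grp g n r) =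
      all (fun x => (x == g * n) || (x %% n == r)) [:: val a; val b; val c].
    apply/subsetP/allP => [H x | H x].
      by rewrite !inE => /or3P [] /eqP ->; rewrite -memSG; apply: H;
         rewrite !inE eqxx ?orbT.
    move=> hx; rewrite memSG; move: hx.
    rewrite !inE => /orP [/orP [] | ] /eqP ->; apply: H;
    by rewrite !inE eqxx ?orbT.
  split.
  + move=> B /mapP [s sA ->]; exists (mkf g n s); split => //.
    exact: mkf_inj (allP HA s sA).
  + move=> t ht H; have [a [b [c [U tE Qt]]]] := key t ht.
    have ins : inside_l g n [:: val a; val b; val c] = false.
      apply/negP => /hasP [r]; rewrite mem_iota /= => rn.
      move=> hall; have st : [set a; b; c] \subset S :|: grp g n r.
        by rewrite sub; exact: hall.
      have GG : grp g n r \in G by apply/imsetP; exists (Ordinal rn).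
      have := H _ GG.
      by rewrite (setIidPl _) ?ht // tE.
    by move: Qt; rewrite /Q ins tE cnt // => /eqP.
  + move=> t ht [Gi /imsetP [r _ ->] st] B /mapP [s sA ->].
    have [a [b [c [U tE Qt]]]] := key t ht.
    have ins : inside_l g n [:: val a; val b; val c].
      apply/hasP; exists (val r); first by rewrite mem_iota /=.
      by move: st; rewrite tE sub.
    move: Qt; rewrite /Q ins eqn0Ngt -has_count => /hasPn /(_ s sA).
    rewrite tE mem_Bof //; exact: (allP HA s sA).
Qed.

Definition A53 : seq (seq nat) := [:: [:: 0; 14; 4; 15; 3]; [:: 3; 2; 7; 15; 6]; [:: 6; 5; 10; 15; 9]; [:: 9; 8; 13; 15; 12]; [:: 12; 11; 1; 15; 0]; [:: 1; 15; 6; 8; 11]; [:: 4; 15; 9; 11; 14]; [:: 7; 15; 12; 14; 2]; [:: 10; 15; 0; 2; 5]; [:: 13; 15; 3; 5; 8]; [:: 1; 15; 9; 14; 7]; [:: 4; 15; 12; 2; 10]; [:: 7; 15; 0; 5; 13]; [:: 10; 15; 3; 8; 1]; [:: 13; 15; 6; 11; 4]; [:: 2; 5; 4; 6; 15]; [:: 5; 8; 7; 9; 15]; [:: 8; 11; 10; 12; 15]; [:: 11; 14; 13; 0; 15]; [:: 14; 2; 1; 3; 15]; [:: 1; 7; 0; 11; 15]; [:: 4; 10; 3; 14; 15]; [:: 7; 13; 6; 2; 15]; [:: 10; 1; 9; 5; 15]; [:: 13; 4; 12; 8; 15]; [:: 1; 2; 7; 8; 15]; [:: 4; 5; 10; 11;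 15]; [:: 7; 8; 13; 14; 15]; [:: 10; 11; 1; 2; 15]; [:: 13; 14; 4; 5; 15]; [:: 0; 7; 10; 14; 15]; [:: 3; 10; 13; 2; 15]; [:: 6; 13; 1; 5; 15]; [:: 9; 1; 4; 8; 15]; [:: 12; 4; 7; 11; 15]; [:: 0; 4; 3; 11; 15]; [:: 3; 7; 6; 14; 15]; [:: 6; 10; 9; 2; 15]; [:: 9; 13; 12; 5; 15]; [:: 12; 1; 0; 8; 15]; [:: 0; 6; 5; 8; 1]; [:: 3; 9; 8; 11; 4]; [:: 6; 12; 11; 14; 7]; [:: 9; 0; 14; 2; 10]; [:: 12; 3; 2; 5; 13]; [:: 0; 8; 2; 13; 14]; [:: 3; 11; 5; 1; 2]; [:: 6; 14; 8; 4; 5]; [:: 9; 2; 11; 7; 8]; [:: 12; 5; 14; 10; 11]; [:: 1; 4; 11; 14; 3]; [:: 4; 7; 14; 2; 6]; [:: 7; 10; 2; 5; 9]; [:: 10; 13; 5; 8; 12]; [:: 13; 1; 8; 11; 0]; [:: 0; 10; 8; 9; 6]; [:: 3; 13; 11; 12; 9]; [:: 6; 1; 14; 0; 12]; [:: 9; 4; 2; 3; 0]; [:: 12; 7; 5; 6; 3]; [:: 2; 8; 4; 10; 0]; [:: 5; 11; 7; 13; 3]; [:: 8; 14; 10; 1; 6]; [:: 11; 2; 13; 4; 9]; [:: 14; 5; 1; 7; 12]; [:: 0; 3; 8; 14; 12]; [:: 3; 6; 11; 2; 0]; [:: 6; 9; 14; 5; 3]; [:: 9; 12; 2; 8; 6];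 [:: 12; 0; 5; 11; 9]; [:: 0; 10; 6; 11; 5]; [:: 3; 13; 9; 14; 8]; [:: 6; 1; 12; 2; 11]; [:: 9; 4; 0; 5; 14]; [:: 12; 7; 3; 8; 2]; [:: 1; 4; 0; 2; 6]; [:: 4; 7; 3; 5; 9]; [:: 7; 10; 6; 8; 12]; [:: 10; 13; 9; 11; 0]; [:: 13; 1; 12; 14; 3]; [:: 0; 10; 12; 13; 2]; [:: 3; 13; 0; 1; 5]; [:: 6; 1; 3; 4; 8]; [:: 9; 4; 6; 7; 11]; [:: 12; 7; 9; 10; 14]; [:: 0; 2; 7; 12; 13]; [:: 3; 5; 10; 0; 1]; [:: 6; 8; 13; 3; 4]; [:: 9; 11; 1; 6; 7]; [:: 12; 14; 4; 9; 10]; [:: 1; 5; 4; 12; 3]; [:: 4; 8; 7; 0; 6]; [:: 7; 11; 10; 3; 9]; [:: 10; 14; 13; 6; 12]; [:: 13; 2; 1; 9; 0]; [:: 0; 4; 6; 13; 9]; [:: 3; 7; 9; 1; 12]; [:: 6; 10; 12; 4; 0]; [:: 9; 13; 0; 7; 3]; [:: 12; 1; 3; 10; 6]].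
Definition A55 : seq (seq nat) := [:: [:: 0; 25; 4; 6; 5]; [:: 1; 25; 5; 7; 6]; [:: 2; 25; 6; 8; 7]; [:: 3; 25; 7; 9; 8]; [:: 4; 25; 8; 10; 9]; [:: 5; 25; 9; 11; 10]; [:: 6; 25; 10; 12; 11]; [:: 7; 25; 11; 13; 12]; [:: 8; 25; 12; 14; 13]; [:: 9; 25; 13; 15; 14]; [:: 10; 25; 14; 16; 15]; [:: 11; 25; 15; 17; 16]; [:: 12; 25; 16; 18; 17]; [:: 13; 25; 17; 19; 18]; [:: 14; 25; 18; 20; 19]; [:: 15; 25; 19; 21; 20]; [:: 16; 25; 20; 22; 21]; [:: 17; 25; 21; 23; 22]; [:: 18; 25; 22; 24; 23]; [:: 19; 25; 23; 0; 24]; [:: 20; 25; 24; 1; 0]; [:: 21; 25; 0; 2; 1]; [:: 22; 25; 1; 3; 2]; [:: 23; 25; 2; 4; 3]; [:: 24; 25; 3; 5; 4]; [:: 0; 12; 4; 11; 25]; [:: 1; 13; 5; 12; 25]; [:: 2; 14; 6; 13; 25]; [:: 3; 15; 7; 14; 25]; [:: 4; 16; 8; 15; 25]; [:: 5; 17; 9; 16; 25]; [:: 6; 18; 10; 17; 25]; [:: 7; 19; 11; 18; 25]; [:: 8; 20; 12; 19; 25]; [:: 9; 21; 13; 20; 25]; [:: 10; 22; 14; 21; 25]; [:: 11; 23; 15; 22; 25]; [:: 12; 24; 16; 23; 25]; [:: 13; 0; 17; 24; 25]; [:: 14; 1; 18; 0; 25]; [:: 15; 2; 19; 1; 25]; [::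 16; 3; 20; 2; 25]; [:: 17; 4; 21; 3; 25]; [:: 18; 5; 22; 4; 25]; [:: 19; 6; 23; 5; 25]; [:: 20; 7; 24; 6; 25]; [:: 21; 8; 0; 7; 25]; [:: 22; 9; 1; 8; 25]; [:: 23; 10; 2; 9; 25]; [:: 24; 11; 3; 10; 25]; [:: 0; 25; 8; 24; 5]; [:: 1; 25; 9; 0; 6]; [:: 2; 25; 10; 1; 7]; [:: 3; 25; 11; 2; 8]; [:: 4; 25; 12; 3; 9]; [:: 5; 25; 13; 4; 10]; [:: 6; 25; 14; 5; 11]; [:: 7; 25; 15; 6; 12]; [:: 8; 25; 16; 7; 13]; [:: 9; 25; 17; 8; 14]; [:: 10; 25; 18; 9; 15]; [:: 11; 25; 19; 10; 16]; [:: 12; 25; 20; 11; 17]; [:: 13; 25; 21; 12; 18]; [:: 14; 25; 22; 13; 19]; [:: 15; 25; 23; 14; 20]; [:: 16; 25; 24; 15; 21]; [:: 17; 25; 0; 16; 22]; [:: 18; 25; 1; 17; 23]; [:: 19; 25; 2; 18; 24]; [:: 20; 25; 3; 19; 0]; [:: 21; 25; 4; 20; 1]; [:: 22; 25; 5; 21; 2]; [:: 23; 25; 6; 22; 3]; [:: 24; 25; 7; 23; 4]; [:: 0; 12; 10; 24; 25]; [:: 1; 13; 11; 0; 25]; [:: 2; 14; 12; 1; 25]; [:: 3; 15; 13; 2; 25]; [:: 4; 16; 14; 3; 25]; [:: 5; 17; 15; 4; 25]; [:: 6; 18; 16; 5; 25]; [:: 7; 19; 17; 6; 25]; [:: 8;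 20; 18; 7; 25]; [:: 9; 21; 19; 8; 25]; [:: 10; 22; 20; 9; 25]; [:: 11; 23; 21; 10; 25]; [:: 12; 24; 22; 11; 25]; [:: 13; 0; 23; 12; 25]; [:: 14; 1; 24; 13; 25]; [:: 15; 2; 0; 14; 25]; [:: 16; 3; 1; 15; 25]; [:: 17; 4; 2; 16; 25]; [:: 18; 5; 3; 17; 25]; [:: 19; 6; 4; 18; 25]; [:: 20; 7; 5; 19; 25]; [:: 21; 8; 6; 20; 25]; [:: 22; 9; 7; 21; 25]; [:: 23; 10; 8; 22; 25]; [:: 24; 11; 9; 23; 25]; [:: 0; 3; 10; 23; 25]; [:: 1; 4; 11; 24; 25]; [:: 2; 5; 12; 0; 25]; [:: 3; 6; 13; 1; 25]; [:: 4; 7; 14; 2; 25]; [:: 5; 8; 15; 3; 25]; [:: 6; 9; 16; 4; 25]; [:: 7; 10; 17; 5; 25]; [:: 8; 11; 18; 6; 25]; [:: 9; 12; 19; 7; 25]; [:: 10; 13; 20; 8; 25]; [:: 11; 14; 21; 9; 25]; [:: 12; 15; 22; 10; 25]; [:: 13; 16; 23; 11; 25]; [:: 14; 17; 24; 12; 25]; [:: 15; 18; 0; 13; 25]; [:: 16; 19; 1; 14; 25]; [:: 17; 20; 2; 15; 25]; [:: 18; 21; 3; 16; 25]; [:: 19; 22; 4; 17; 25]; [:: 20; 23; 5; 18; 25]; [:: 21; 24; 6; 19; 25]; [:: 22; 0; 7; 20; 25]; [:: 23; 1; 8; 21; 25]; [:: 24; 2; 9; 22; 25]; [:: 0; 5;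 8; 11; 25]; [:: 1; 6; 9; 12; 25]; [:: 2; 7; 10; 13; 25]; [:: 3; 8; 11; 14; 25]; [:: 4; 9; 12; 15; 25]; [:: 5; 10; 13; 16; 25]; [:: 6; 11; 14; 17; 25]; [:: 7; 12; 15; 18; 25]; [:: 8; 13; 16; 19; 25]; [:: 9; 14; 17; 20; 25]; [:: 10; 15; 18; 21; 25]; [:: 11; 16; 19; 22; 25]; [:: 12; 17; 20; 23; 25]; [:: 13; 18; 21; 24; 25]; [:: 14; 19; 22; 0; 25]; [:: 15; 20; 23; 1; 25]; [:: 16; 21; 24; 2; 25]; [:: 17; 22; 0; 3; 25]; [:: 18; 23; 1; 4; 25]; [:: 19; 24; 2; 5; 25]; [:: 20; 0; 3; 6; 25]; [:: 21; 1; 4; 7; 25]; [:: 22; 2; 5; 8; 25]; [:: 23; 3; 6; 9; 25]; [:: 24; 4; 7; 10; 25]; [:: 0; 12; 1; 7; 24]; [:: 1; 13; 2; 8; 0]; [:: 2; 14; 3; 9; 1]; [:: 3; 15; 4; 10; 2]; [:: 4; 16; 5; 11; 3]; [:: 5; 17; 6; 12; 4]; [:: 6; 18; 7; 13; 5]; [:: 7; 19; 8; 14; 6]; [:: 8; 20; 9; 15; 7]; [:: 9; 21; 10; 16; 8]; [:: 10; 22; 11; 17; 9]; [:: 11; 23; 12; 18; 10]; [:: 12; 24; 13; 19; 11]; [:: 13; 0; 14; 20; 12]; [:: 14; 1; 15; 21; 13]; [:: 15; 2; 16; 22; 14]; [:: 16; 3; 17; 23; 15]; [:: 17; 4; 18;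 24; 16]; [:: 18; 5; 19; 0; 17]; [:: 19; 6; 20; 1; 18]; [:: 20; 7; 21; 2; 19]; [:: 21; 8; 22; 3; 20]; [:: 22; 9; 23; 4; 21]; [:: 23; 10; 24; 5; 22]; [:: 24; 11; 0; 6; 23]; [:: 0; 4; 1; 3; 17]; [:: 1; 5; 2; 4; 18]; [:: 2; 6; 3; 5; 19]; [:: 3; 7; 4; 6; 20]; [:: 4; 8; 5; 7; 21]; [:: 5; 9; 6; 8; 22]; [:: 6; 10; 7; 9; 23]; [:: 7; 11; 8; 10; 24]; [:: 8; 12; 9; 11; 0]; [:: 9; 13; 10; 12; 1]; [:: 10; 14; 11; 13; 2]; [:: 11; 15; 12; 14; 3]; [:: 12; 16; 13; 15; 4]; [:: 13; 17; 14; 16; 5]; [:: 14; 18; 15; 17; 6]; [:: 15; 19; 16; 18; 7]; [:: 16; 20; 17; 19; 8]; [:: 17; 21; 18; 20; 9]; [:: 18; 22; 19; 21; 10]; [:: 19; 23; 20; 22; 11]; [:: 20; 24; 21; 23; 12]; [:: 21; 0; 22; 24; 13]; [:: 22; 1; 23; 0; 14]; [:: 23; 2; 24; 1; 15]; [:: 24; 3; 0; 2; 16]; [:: 0; 4; 7; 18; 1]; [:: 1; 5; 8; 19; 2]; [:: 2; 6; 9; 20; 3]; [:: 3; 7; 10; 21; 4]; [:: 4; 8; 11; 22; 5]; [:: 5; 9; 12; 23; 6]; [:: 6; 10; 13; 24; 7]; [:: 7; 11; 14; 0; 8]; [:: 8; 12; 15; 1; 9]; [:: 9; 13; 16; 2;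 10]; [:: 10; 14; 17; 3; 11]; [:: 11; 15; 18; 4; 12]; [:: 12; 16; 19; 5; 13]; [:: 13; 17; 20; 6; 14]; [:: 14; 18; 21; 7; 15]; [:: 15; 19; 22; 8; 16]; [:: 16; 20; 23; 9; 17]; [:: 17; 21; 24; 10; 18]; [:: 18; 22; 0; 11; 19]; [:: 19; 23; 1; 12; 20]; [:: 20; 24; 2; 13; 21]; [:: 21; 0; 3; 14; 22]; [:: 22; 1; 4; 15; 23]; [:: 23; 2; 5; 16; 24]; [:: 24; 3; 6; 17; 0]; [:: 0; 7; 2; 6; 17]; [:: 1; 8; 3; 7; 18]; [:: 2; 9; 4; 8; 19]; [:: 3; 10; 5; 9; 20]; [:: 4; 11; 6; 10; 21]; [:: 5; 12; 7; 11; 22]; [:: 6; 13; 8; 12; 23]; [:: 7; 14; 9; 13; 24]; [:: 8; 15; 10; 14; 0]; [:: 9; 16; 11; 15; 1]; [:: 10; 17; 12; 16; 2]; [:: 11; 18; 13; 17; 3]; [:: 12; 19; 14; 18; 4]; [:: 13; 20; 15; 19; 5]; [:: 14; 21; 16; 20; 6]; [:: 15; 22; 17; 21; 7]; [:: 16; 23; 18; 22; 8]; [:: 17; 24; 19; 23; 9]; [:: 18; 0; 20; 24; 10]; [:: 19; 1; 21; 0; 11]; [:: 20; 2; 22; 1; 12]; [:: 21; 3; 23; 2; 13]; [:: 22; 4; 24; 3; 14]; [:: 23; 5; 0; 4; 15]; [:: 24; 6; 1; 5; 16]; [:: 0; 5; 1; 17; 15]; [:: 1; 6; 2; 18; 16];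 [:: 2; 7; 3; 19; 17]; [:: 3; 8; 4; 20; 18]; [:: 4; 9; 5; 21; 19]; [:: 5; 10; 6; 22; 20]; [:: 6; 11; 7; 23; 21]; [:: 7; 12; 8; 24; 22]; [:: 8; 13; 9; 0; 23]; [:: 9; 14; 10; 1; 24]; [:: 10; 15; 11; 2; 0]; [:: 11; 16; 12; 3; 1]; [:: 12; 17; 13; 4; 2]; [:: 13; 18; 14; 5; 3]; [:: 14; 19; 15; 6; 4]; [:: 15; 20; 16; 7; 5]; [:: 16; 21; 17; 8; 6]; [:: 17; 22; 18; 9; 7]; [:: 18; 23; 19; 10; 8]; [:: 19; 24; 20; 11; 9]; [:: 20; 0; 21; 12; 10]; [:: 21; 1; 22; 13; 11]; [:: 22; 2; 23; 14; 12]; [:: 23; 3; 24; 15; 13]; [:: 24; 4; 0; 16; 14]; [:: 0; 3; 5; 13; 9]; [:: 1; 4; 6; 14; 10]; [:: 2; 5; 7; 15; 11]; [:: 3; 6; 8; 16; 12]; [:: 4; 7; 9; 17; 13]; [:: 5; 8; 10; 18; 14]; [:: 6; 9; 11; 19; 15]; [:: 7; 10; 12; 20; 16]; [:: 8; 11; 13; 21; 17]; [:: 9; 12; 14; 22; 18]; [:: 10; 13; 15; 23; 19]; [:: 11; 14; 16; 24; 20]; [:: 12; 15; 17; 0; 21]; [:: 13; 16; 18; 1; 22]; [:: 14; 17; 19; 2; 23]; [:: 15; 18; 20; 3; 24]; [:: 16; 19; 21; 4; 0]; [:: 17; 20; 22; 5; 1]; [:: 18; 21; 23; 6; 2]; [::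 19; 22; 24; 7; 3]; [:: 20; 23; 0; 8; 4]; [:: 21; 24; 1; 9; 5]; [:: 22; 0; 2; 10; 6]; [:: 23; 1; 3; 11; 7]; [:: 24; 2; 4; 12; 8]; [:: 0; 9; 4; 10; 22]; [:: 1; 10; 5; 11; 23]; [:: 2; 11; 6; 12; 24]; [:: 3; 12; 7; 13; 0]; [:: 4; 13; 8; 14; 1]; [:: 5; 14; 9; 15; 2]; [:: 6; 15; 10; 16; 3]; [:: 7; 16; 11; 17; 4]; [:: 8; 17; 12; 18; 5]; [:: 9; 18; 13; 19; 6]; [:: 10; 19; 14; 20; 7]; [:: 11; 20; 15; 21; 8]; [:: 12; 21; 16; 22; 9]; [:: 13; 22; 17; 23; 10]; [:: 14; 23; 18; 24; 11]; [:: 15; 24; 19; 0; 12]; [:: 16; 0; 20; 1; 13]; [:: 17; 1; 21; 2; 14]; [:: 18; 2; 22; 3; 15]; [:: 19; 3; 23; 4; 16]; [:: 20; 4; 24; 5; 17]; [:: 21; 5; 0; 6; 18]; [:: 22; 6; 1; 7; 19]; [:: 23; 7; 2; 8; 20]; [:: 24; 8; 3; 9; 21]; [:: 0; 3; 7; 16; 21]; [:: 1; 4; 8; 17; 22]; [:: 2; 5; 9; 18; 23]; [:: 3; 6; 10; 19; 24]; [:: 4; 7; 11; 20; 0]; [:: 5; 8; 12; 21; 1]; [:: 6; 9; 13; 22; 2]; [:: 7; 10; 14; 23; 3]; [:: 8; 11; 15; 24; 4]; [:: 9; 12; 16; 0; 5]; [:: 10; 13; 17; 1; 6]; [:: 11;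 14; 18; 2; 7]; [:: 12; 15; 19; 3; 8]; [:: 13; 16; 20; 4; 9]; [:: 14; 17; 21; 5; 10]; [:: 15; 18; 22; 6; 11]; [:: 16; 19; 23; 7; 12]; [:: 17; 20; 24; 8; 13]; [:: 18; 21; 0; 9; 14]; [:: 19; 22; 1; 10; 15]; [:: 20; 23; 2; 11; 16]; [:: 21; 24; 3; 12; 17]; [:: 22; 0; 4; 13; 18]; [:: 23; 1; 5; 14; 19]; [:: 24; 2; 6; 15; 20]; [:: 0; 8; 12; 22; 5]; [:: 1; 9; 13; 23; 6]; [:: 2; 10; 14; 24; 7]; [:: 3; 11; 15; 0; 8]; [:: 4; 12; 16; 1; 9]; [:: 5; 13; 17; 2; 10]; [:: 6; 14; 18; 3; 11]; [:: 7; 15; 19; 4; 12]; [:: 8; 16; 20; 5; 13]; [:: 9; 17; 21; 6; 14]; [:: 10; 18; 22; 7; 15]; [:: 11; 19; 23; 8; 16]; [:: 12; 20; 24; 9; 17]; [:: 13; 21; 0; 10; 18]; [:: 14; 22; 1; 11; 19]; [:: 15; 23; 2; 12; 20]; [:: 16; 24; 3; 13; 21]; [:: 17; 0; 4; 14; 22]; [:: 18; 1; 5; 15; 23]; [:: 19; 2; 6; 16; 24]; [:: 20; 3; 7; 17; 0]; [:: 21; 4; 8; 18; 1]; [:: 22; 5; 9; 19; 2]; [:: 23; 6; 10; 20; 3]; [:: 24; 7; 11; 21; 4]; [:: 0; 1; 6; 15; 9]; [:: 1; 2; 7; 16; 10]; [:: 2; 3; 8; 17; 11]; [:: 3; 4;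 9; 18; 12]; [:: 4; 5; 10; 19; 13]; [:: 5; 6; 11; 20; 14]; [:: 6; 7; 12; 21; 15]; [:: 7; 8; 13; 22; 16]; [:: 8; 9; 14; 23; 17]; [:: 9; 10; 15; 24; 18]; [:: 10; 11; 16; 0; 19]; [:: 11; 12; 17; 1; 20]; [:: 12; 13; 18; 2; 21]; [:: 13; 14; 19; 3; 22]; [:: 14; 15; 20; 4; 23]; [:: 15; 16; 21; 5; 24]; [:: 16; 17; 22; 6; 0]; [:: 17; 18; 23; 7; 1]; [:: 18; 19; 24; 8; 2]; [:: 19; 20; 0; 9; 3]; [:: 20; 21; 1; 10; 4]; [:: 21; 22; 2; 11; 5]; [:: 22; 23; 3; 12; 6]; [:: 23; 24; 4; 13; 7]; [:: 24; 0; 5; 14; 8]; [:: 0; 6; 13; 16; 21]; [:: 1; 7; 14; 17; 22]; [:: 2; 8; 15; 18; 23]; [:: 3; 9; 16; 19; 24]; [:: 4; 10; 17; 20; 0]; [:: 5; 11; 18; 21; 1]; [:: 6; 12; 19; 22; 2]; [:: 7; 13; 20; 23; 3]; [:: 8; 14; 21; 24; 4]; [:: 9; 15; 22; 0; 5]; [:: 10; 16; 23; 1; 6]; [:: 11; 17; 24; 2; 7]; [:: 12; 18; 0; 3; 8]; [:: 13; 19; 1; 4; 9]; [:: 14; 20; 2; 5; 10]; [:: 15; 21; 3; 6; 11]; [:: 16; 22; 4; 7; 12]; [:: 17; 23; 5; 8; 13]; [:: 18; 24; 6; 9; 14]; [:: 19; 0; 7; 10; 15]; [:: 20; 1; 8;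 11; 16]; [:: 21; 2; 9; 12; 17]; [:: 22; 3; 10; 13; 18]; [:: 23; 4; 11; 14; 19]; [:: 24; 5; 12; 15; 20]; [:: 0; 2; 13; 19; 23]; [:: 1; 3; 14; 20; 24]; [:: 2; 4; 15; 21; 0]; [:: 3; 5; 16; 22; 1]; [:: 4; 6; 17; 23; 2]; [:: 5; 7; 18; 24; 3]; [:: 6; 8; 19; 0; 4]; [:: 7; 9; 20; 1; 5]; [:: 8; 10; 21; 2; 6]; [:: 9; 11; 22; 3; 7]; [:: 10; 12; 23; 4; 8]; [:: 11; 13; 24; 5; 9]; [:: 12; 14; 0; 6; 10]; [:: 13; 15; 1; 7; 11]; [:: 14; 16; 2; 8; 12]; [:: 15; 17; 3; 9; 13]; [:: 16; 18; 4; 10; 14]; [:: 17; 19; 5; 11; 15]; [:: 18; 20; 6; 12; 16]; [:: 19; 21; 7; 13; 17]; [:: 20; 22; 8; 14; 18]; [:: 21; 23; 9; 15; 19]; [:: 22; 24; 10; 16; 20]; [:: 23; 0; 11; 17; 21]; [:: 24; 1; 12; 18; 22]; [:: 0; 2; 4; 20; 19]; [:: 1; 3; 5; 21; 20]; [:: 2; 4; 6; 22; 21]; [:: 3; 5; 7; 23; 22]; [:: 4; 6; 8; 24; 23]; [:: 5; 7; 9; 0; 24]; [:: 6; 8; 10; 1; 0]; [:: 7; 9; 11; 2; 1]; [:: 8; 10; 12; 3; 2]; [:: 9; 11; 13; 4; 3]; [:: 10; 12; 14; 5; 4]; [:: 11; 13; 15; 6; 5]; [:: 12; 14; 16; 7;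 6]; [:: 13; 15; 17; 8; 7]; [:: 14; 16; 18; 9; 8]; [:: 15; 17; 19; 10; 9]; [:: 16; 18; 20; 11; 10]; [:: 17; 19; 21; 12; 11]; [:: 18; 20; 22; 13; 12]; [:: 19; 21; 23; 14; 13]; [:: 20; 22; 24; 15; 14]; [:: 21; 23; 0; 16; 15]; [:: 22; 24; 1; 17; 16]; [:: 23; 0; 2; 18; 17]; [:: 24; 1; 3; 19; 18]; [:: 0; 2; 9; 17; 10]; [:: 1; 3; 10; 18; 11]; [:: 2; 4; 11; 19; 12]; [:: 3; 5; 12; 20; 13]; [:: 4; 6; 13; 21; 14]; [:: 5; 7; 14; 22; 15]; [:: 6; 8; 15; 23; 16]; [:: 7; 9; 16; 24; 17]; [:: 8; 10; 17; 0; 18]; [:: 9; 11; 18; 1; 19]; [:: 10; 12; 19; 2; 20]; [:: 11; 13; 20; 3; 21]; [:: 12; 14; 21; 4; 22]; [:: 13; 15; 22; 5; 23]; [:: 14; 16; 23; 6; 24]; [:: 15; 17; 24; 7; 0]; [:: 16; 18; 0; 8; 1]; [:: 17; 19; 1; 9; 2]; [:: 18; 20; 2; 10; 3]; [:: 19; 21; 3; 11; 4]; [:: 20; 22; 4; 12; 5]; [:: 21; 23; 5; 13; 6]; [:: 22; 24; 6; 14; 7]; [:: 23; 0; 7; 15; 8]; [:: 24; 1; 8; 16; 9]].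
Definition A64 : seq (seq nat) := [:: [:: 0; 24; 15; 17; 18]; [:: 1; 24; 16; 18; 19]; [:: 2; 24; 17; 19; 20]; [:: 3; 24; 18; 20; 21]; [:: 4; 24; 19; 21; 22]; [:: 5; 24; 20; 22; 23]; [:: 6; 24; 21; 23; 0]; [:: 7; 24; 22; 0; 1]; [:: 8; 24; 23; 1; 2]; [:: 9; 24; 0; 2; 3]; [:: 10; 24; 1; 3; 4]; [:: 11; 24; 2; 4; 5]; [:: 12; 24; 3; 5; 6]; [:: 13; 24; 4; 6; 7]; [:: 14; 24; 5; 7; 8]; [:: 15; 24; 6; 8; 9]; [:: 16; 24; 7; 9; 10]; [:: 17; 24; 8; 10; 11]; [:: 18; 24; 9; 11; 12]; [:: 19; 24; 10; 12; 13]; [:: 20; 24; 11; 13; 14]; [:: 21; 24; 12; 14; 15]; [:: 22; 24; 13; 15; 16]; [:: 23; 24; 14; 16; 17]; [:: 0; 3; 14; 24; 9]; [:: 1; 4; 15; 24; 10]; [:: 2; 5; 16; 24; 11]; [:: 3; 6; 17; 24; 12]; [:: 4; 7; 18; 24; 13]; [:: 5; 8; 19; 24; 14]; [:: 6; 9; 20; 24; 15]; [:: 7; 10; 21; 24; 16]; [:: 8; 11; 22; 24; 17]; [:: 9; 12; 23; 24; 18]; [:: 10; 13; 0; 24; 19]; [:: 11; 14; 1; 24; 20]; [:: 12; 15; 2; 24; 21]; [:: 13; 16; 3; 24; 22]; [:: 14; 17; 4; 24; 23]; [:: 15; 18; 5; 24; 0]; [:: 16; 19; 6; 24; 1]; [::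 17; 20; 7; 24; 2]; [:: 18; 21; 8; 24; 3]; [:: 19; 22; 9; 24; 4]; [:: 20; 23; 10; 24; 5]; [:: 21; 0; 11; 24; 6]; [:: 22; 1; 12; 24; 7]; [:: 23; 2; 13; 24; 8]; [:: 0; 8; 21; 22; 24]; [:: 1; 9; 22; 23; 24]; [:: 2; 10; 23; 0; 24]; [:: 3; 11; 0; 1; 24]; [:: 4; 12; 1; 2; 24]; [:: 5; 13; 2; 3; 24]; [:: 6; 14; 3; 4; 24]; [:: 7; 15; 4; 5; 24]; [:: 8; 16; 5; 6; 24]; [:: 9; 17; 6; 7; 24]; [:: 10; 18; 7; 8; 24]; [:: 11; 19; 8; 9; 24]; [:: 12; 20; 9; 10; 24]; [:: 13; 21; 10; 11; 24]; [:: 14; 22; 11; 12; 24]; [:: 15; 23; 12; 13; 24]; [:: 16; 0; 13; 14; 24]; [:: 17; 1; 14; 15; 24]; [:: 18; 2; 15; 16; 24]; [:: 19; 3; 16; 17; 24]; [:: 20; 4; 17; 18; 24]; [:: 21; 5; 18; 19; 24]; [:: 22; 6; 19; 20; 24]; [:: 23; 7; 20; 21; 24]; [:: 0; 12; 3; 9; 24]; [:: 1; 13; 4; 10; 24]; [:: 2; 14; 5; 11; 24]; [:: 3; 15; 6; 12; 24]; [:: 4; 16; 7; 13; 24]; [:: 5; 17; 8; 14; 24]; [:: 6; 18; 9; 15; 24]; [:: 7; 19; 10; 16; 24]; [:: 8; 20; 11; 17; 24]; [:: 9; 21; 12; 18; 24]; [:: 10; 22; 13; 19; 24]; [:: 11;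 23; 14; 20; 24]; [:: 12; 0; 15; 21; 24]; [:: 13; 1; 16; 22; 24]; [:: 14; 2; 17; 23; 24]; [:: 15; 3; 18; 0; 24]; [:: 16; 4; 19; 1; 24]; [:: 17; 5; 20; 2; 24]; [:: 18; 6; 21; 3; 24]; [:: 19; 7; 22; 4; 24]; [:: 20; 8; 23; 5; 24]; [:: 21; 9; 0; 6; 24]; [:: 22; 10; 1; 7; 24]; [:: 23; 11; 2; 8; 24]; [:: 0; 2; 4; 14; 1]; [:: 1; 3; 5; 15; 2]; [:: 2; 4; 6; 16; 3]; [:: 3; 5; 7; 17; 4]; [:: 4; 6; 8; 18; 5]; [:: 5; 7; 9; 19; 6]; [:: 6; 8; 10; 20; 7]; [:: 7; 9; 11; 21; 8]; [:: 8; 10; 12; 22; 9]; [:: 9; 11; 13; 23; 10]; [:: 10; 12; 14; 0; 11]; [:: 11; 13; 15; 1; 12]; [:: 12; 14; 16; 2; 13]; [:: 13; 15; 17; 3; 14]; [:: 14; 16; 18; 4; 15]; [:: 15; 17; 19; 5; 16]; [:: 16; 18; 20; 6; 17]; [:: 17; 19; 21; 7; 18]; [:: 18; 20; 22; 8; 19]; [:: 19; 21; 23; 9; 20]; [:: 20; 22; 0; 10; 21]; [:: 21; 23; 1; 11; 22]; [:: 22; 0; 2; 12; 23]; [:: 23; 1; 3; 13; 0]; [:: 0; 4; 7; 9; 23]; [:: 1; 5; 8; 10; 0]; [:: 2; 6; 9; 11; 1]; [:: 3; 7; 10; 12; 2]; [:: 4; 8; 11; 13; 3]; [:: 5; 9;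 12; 14; 4]; [:: 6; 10; 13; 15; 5]; [:: 7; 11; 14; 16; 6]; [:: 8; 12; 15; 17; 7]; [:: 9; 13; 16; 18; 8]; [:: 10; 14; 17; 19; 9]; [:: 11; 15; 18; 20; 10]; [:: 12; 16; 19; 21; 11]; [:: 13; 17; 20; 22; 12]; [:: 14; 18; 21; 23; 13]; [:: 15; 19; 22; 0; 14]; [:: 16; 20; 23; 1; 15]; [:: 17; 21; 0; 2; 16]; [:: 18; 22; 1; 3; 17]; [:: 19; 23; 2; 4; 18]; [:: 20; 0; 3; 5; 19]; [:: 21; 1; 4; 6; 20]; [:: 22; 2; 5; 7; 21]; [:: 23; 3; 6; 8; 22]; [:: 0; 2; 13; 18; 10]; [:: 1; 3; 14; 19; 11]; [:: 2; 4; 15; 20; 12]; [:: 3; 5; 16; 21; 13]; [:: 4; 6; 17; 22; 14]; [:: 5; 7; 18; 23; 15]; [:: 6; 8; 19; 0; 16]; [:: 7; 9; 20; 1; 17]; [:: 8; 10; 21; 2; 18]; [:: 9; 11; 22; 3; 19]; [:: 10; 12; 23; 4; 20]; [:: 11; 13; 0; 5; 21]; [:: 12; 14; 1; 6; 22]; [:: 13; 15; 2; 7; 23]; [:: 14; 16; 3; 8; 0]; [:: 15; 17; 4; 9; 1]; [:: 16; 18; 5; 10; 2]; [:: 17; 19; 6; 11; 3]; [:: 18; 20; 7; 12; 4]; [:: 19; 21; 8; 13; 5]; [:: 20; 22; 9; 14; 6]; [:: 21; 23; 10; 15; 7]; [:: 22; 0; 11; 16; 8]; [:: 23; 1; 12;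 17; 9]; [:: 0; 6; 2; 20; 23]; [:: 1; 7; 3; 21; 0]; [:: 2; 8; 4; 22; 1]; [:: 3; 9; 5; 23; 2]; [:: 4; 10; 6; 0; 3]; [:: 5; 11; 7; 1; 4]; [:: 6; 12; 8; 2; 5]; [:: 7; 13; 9; 3; 6]; [:: 8; 14; 10; 4; 7]; [:: 9; 15; 11; 5; 8]; [:: 10; 16; 12; 6; 9]; [:: 11; 17; 13; 7; 10]; [:: 12; 18; 14; 8; 11]; [:: 13; 19; 15; 9; 12]; [:: 14; 20; 16; 10; 13]; [:: 15; 21; 17; 11; 14]; [:: 16; 22; 18; 12; 15]; [:: 17; 23; 19; 13; 16]; [:: 18; 0; 20; 14; 17]; [:: 19; 1; 21; 15; 18]; [:: 20; 2; 22; 16; 19]; [:: 21; 3; 23; 17; 20]; [:: 22; 4; 0; 18; 21]; [:: 23; 5; 1; 19; 22]; [:: 0; 8; 11; 15; 14]; [:: 1; 9; 12; 16; 15]; [:: 2; 10; 13; 17; 16]; [:: 3; 11; 14; 18; 17]; [:: 4; 12; 15; 19; 18]; [:: 5; 13; 16; 20; 19]; [:: 6; 14; 17; 21; 20]; [:: 7; 15; 18; 22; 21]; [:: 8; 16; 19; 23; 22]; [:: 9; 17; 20; 0; 23]; [:: 10; 18; 21; 1; 0]; [:: 11; 19; 22; 2; 1]; [:: 12; 20; 23; 3; 2]; [:: 13; 21; 0; 4; 3]; [:: 14; 22; 1; 5; 4]; [:: 15; 23; 2; 6; 5]; [:: 16; 0; 3; 7; 6]; [:: 17; 1; 4; 8;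 7]; [:: 18; 2; 5; 9; 8]; [:: 19; 3; 6; 10; 9]; [:: 20; 4; 7; 11; 10]; [:: 21; 5; 8; 12; 11]; [:: 22; 6; 9; 13; 12]; [:: 23; 7; 10; 14; 13]; [:: 0; 5; 15; 23; 20]; [:: 1; 6; 16; 0; 21]; [:: 2; 7; 17; 1; 22]; [:: 3; 8; 18; 2; 23]; [:: 4; 9; 19; 3; 0]; [:: 5; 10; 20; 4; 1]; [:: 6; 11; 21; 5; 2]; [:: 7; 12; 22; 6; 3]; [:: 8; 13; 23; 7; 4]; [:: 9; 14; 0; 8; 5]; [:: 10; 15; 1; 9; 6]; [:: 11; 16; 2; 10; 7]; [:: 12; 17; 3; 11; 8]; [:: 13; 18; 4; 12; 9]; [:: 14; 19; 5; 13; 10]; [:: 15; 20; 6; 14; 11]; [:: 16; 21; 7; 15; 12]; [:: 17; 22; 8; 16; 13]; [:: 18; 23; 9; 17; 14]; [:: 19; 0; 10; 18; 15]; [:: 20; 1; 11; 19; 16]; [:: 21; 2; 12; 20; 17]; [:: 22; 3; 13; 21; 18]; [:: 23; 4; 14; 22; 19]; [:: 0; 2; 7; 11; 22]; [:: 1; 3; 8; 12; 23]; [:: 2; 4; 9; 13; 0]; [:: 3; 5; 10; 14; 1]; [:: 4; 6; 11; 15; 2]; [:: 5; 7; 12; 16; 3]; [:: 6; 8; 13; 17; 4]; [:: 7; 9; 14; 18; 5]; [:: 8; 10; 15; 19; 6]; [:: 9; 11; 16; 20; 7]; [:: 10; 12; 17; 21; 8]; [:: 11; 13; 18; 22; 9];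 [:: 12; 14; 19; 23; 10]; [:: 13; 15; 20; 0; 11]; [:: 14; 16; 21; 1; 12]; [:: 15; 17; 22; 2; 13]; [:: 16; 18; 23; 3; 14]; [:: 17; 19; 0; 4; 15]; [:: 18; 20; 1; 5; 16]; [:: 19; 21; 2; 6; 17]; [:: 20; 22; 3; 7; 18]; [:: 21; 23; 4; 8; 19]; [:: 22; 0; 5; 9; 20]; [:: 23; 1; 6; 10; 21]; [:: 0; 2; 1; 15; 18]; [:: 1; 3; 2; 16; 19]; [:: 2; 4; 3; 17; 20]; [:: 3; 5; 4; 18; 21]; [:: 4; 6; 5; 19; 22]; [:: 5; 7; 6; 20; 23]; [:: 6; 8; 7; 21; 0]; [:: 7; 9; 8; 22; 1]; [:: 8; 10; 9; 23; 2]; [:: 9; 11; 10; 0; 3]; [:: 10; 12; 11; 1; 4]; [:: 11; 13; 12; 2; 5]; [:: 12; 14; 13; 3; 6]; [:: 13; 15; 14; 4; 7]; [:: 14; 16; 15; 5; 8]; [:: 15; 17; 16; 6; 9]; [:: 16; 18; 17; 7; 10]; [:: 17; 19; 18; 8; 11]; [:: 18; 20; 19; 9; 12]; [:: 19; 21; 20; 10; 13]; [:: 20; 22; 21; 11; 14]; [:: 21; 23; 22; 12; 15]; [:: 22; 0; 23; 13; 16]; [:: 23; 1; 0; 14; 17]; [:: 0; 11; 17; 18; 21]; [:: 1; 12; 18; 19; 22]; [:: 2; 13; 19; 20; 23]; [:: 3; 14; 20; 21; 0]; [:: 4; 15; 21; 22; 1]; [:: 5; 16; 22; 23; 2]; [::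 6; 17; 23; 0; 3]; [:: 7; 18; 0; 1; 4]; [:: 8; 19; 1; 2; 5]; [:: 9; 20; 2; 3; 6]; [:: 10; 21; 3; 4; 7]; [:: 11; 22; 4; 5; 8]; [:: 12; 23; 5; 6; 9]; [:: 13; 0; 6; 7; 10]; [:: 14; 1; 7; 8; 11]; [:: 15; 2; 8; 9; 12]; [:: 16; 3; 9; 10; 13]; [:: 17; 4; 10; 11; 14]; [:: 18; 5; 11; 12; 15]; [:: 19; 6; 12; 13; 16]; [:: 20; 7; 13; 14; 17]; [:: 21; 8; 14; 15; 18]; [:: 22; 9; 15; 16; 19]; [:: 23; 10; 16; 17; 20]; [:: 0; 6; 5; 14; 20]; [:: 1; 7; 6; 15; 21]; [:: 2; 8; 7; 16; 22]; [:: 3; 9; 8; 17; 23]; [:: 4; 10; 9; 18; 0]; [:: 5; 11; 10; 19; 1]; [:: 6; 12; 11; 20; 2]; [:: 7; 13; 12; 21; 3]; [:: 8; 14; 13; 22; 4]; [:: 9; 15; 14; 23; 5]; [:: 10; 16; 15; 0; 6]; [:: 11; 17; 16; 1; 7]; [:: 12; 18; 17; 2; 8]; [:: 13; 19; 18; 3; 9]; [:: 14; 20; 19; 4; 10]; [:: 15; 21; 20; 5; 11]; [:: 16; 22; 21; 6; 12]; [:: 17; 23; 22; 7; 13]; [:: 18; 0; 23; 8; 14]; [:: 19; 1; 0; 9; 15]; [:: 20; 2; 1; 10; 16]; [:: 21; 3; 2; 11; 17]; [:: 22; 4; 3; 12; 18]; [:: 23; 5; 4; 13; 19]; [:: 0;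 8; 1; 13; 7]; [:: 1; 9; 2; 14; 8]; [:: 2; 10; 3; 15; 9]; [:: 3; 11; 4; 16; 10]; [:: 4; 12; 5; 17; 11]; [:: 5; 13; 6; 18; 12]; [:: 6; 14; 7; 19; 13]; [:: 7; 15; 8; 20; 14]; [:: 8; 16; 9; 21; 15]; [:: 9; 17; 10; 22; 16]; [:: 10; 18; 11; 23; 17]; [:: 11; 19; 12; 0; 18]; [:: 12; 20; 13; 1; 19]; [:: 13; 21; 14; 2; 20]; [:: 14; 22; 15; 3; 21]; [:: 15; 23; 16; 4; 22]; [:: 16; 0; 17; 5; 23]; [:: 17; 1; 18; 6; 0]; [:: 18; 2; 19; 7; 1]; [:: 19; 3; 20; 8; 2]; [:: 20; 4; 21; 9; 3]; [:: 21; 5; 22; 10; 4]; [:: 22; 6; 23; 11; 5]; [:: 23; 7; 0; 12; 6]; [:: 0; 5; 1; 12; 7]; [:: 1; 6; 2; 13; 8]; [:: 2; 7; 3; 14; 9]; [:: 3; 8; 4; 15; 10]; [:: 4; 9; 5; 16; 11]; [:: 5; 10; 6; 17; 12]; [:: 6; 11; 7; 18; 13]; [:: 7; 12; 8; 19; 14]; [:: 8; 13; 9; 20; 15]; [:: 9; 14; 10; 21; 16]; [:: 10; 15; 11; 22; 17]; [:: 11; 16; 12; 23; 18]; [:: 12; 17; 13; 0; 19]; [:: 13; 18; 14; 1; 20]; [:: 14; 19; 15; 2; 21]; [:: 15; 20; 16; 3; 22]; [:: 16; 21; 17; 4; 23]; [:: 17; 22; 18; 5; 0]; [:: 18; 23;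 19; 6; 1]; [:: 19; 0; 20; 7; 2]; [:: 20; 1; 21; 8; 3]; [:: 21; 2; 22; 9; 4]; [:: 22; 3; 23; 10; 5]; [:: 23; 4; 0; 11; 6]; [:: 0; 3; 17; 22; 21]; [:: 1; 4; 18; 23; 22]; [:: 2; 5; 19; 0; 23]; [:: 3; 6; 20; 1; 0]; [:: 4; 7; 21; 2; 1]; [:: 5; 8; 22; 3; 2]; [:: 6; 9; 23; 4; 3]; [:: 7; 10; 0; 5; 4]; [:: 8; 11; 1; 6; 5]; [:: 9; 12; 2; 7; 6]; [:: 10; 13; 3; 8; 7]; [:: 11; 14; 4; 9; 8]; [:: 12; 15; 5; 10; 9]; [:: 13; 16; 6; 11; 10]; [:: 14; 17; 7; 12; 11]; [:: 15; 18; 8; 13; 12]; [:: 16; 19; 9; 14; 13]; [:: 17; 20; 10; 15; 14]; [:: 18; 21; 11; 16; 15]; [:: 19; 22; 12; 17; 16]; [:: 20; 23; 13; 18; 17]; [:: 21; 0; 14; 19; 18]; [:: 22; 1; 15; 20; 19]; [:: 23; 2; 16; 21; 20]; [:: 0; 10; 1; 17; 19]; [:: 1; 11; 2; 18; 20]; [:: 2; 12; 3; 19; 21]; [:: 3; 13; 4; 20; 22]; [:: 4; 14; 5; 21; 23]; [:: 5; 15; 6; 22; 0]; [:: 6; 16; 7; 23; 1]; [:: 7; 17; 8; 0; 2]; [:: 8; 18; 9; 1; 3]; [:: 9; 19; 10; 2; 4]; [:: 10; 20; 11; 3; 5]; [:: 11; 21; 12; 4; 6]; [:: 12; 22; 13;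 5; 7]; [:: 13; 23; 14; 6; 8]; [:: 14; 0; 15; 7; 9]; [:: 15; 1; 16; 8; 10]; [:: 16; 2; 17; 9; 11]; [:: 17; 3; 18; 10; 12]; [:: 18; 4; 19; 11; 13]; [:: 19; 5; 20; 12; 14]; [:: 20; 6; 21; 13; 15]; [:: 21; 7; 22; 14; 16]; [:: 22; 8; 23; 15; 17]; [:: 23; 9; 0; 16; 18]].
Definition A102 : seq (seq nat) := [:: [:: 0; 3; 6; 15; 20]; [:: 1; 4; 7; 16; 20]; [:: 2; 5; 8; 17; 20]; [:: 3; 6; 9; 18; 20]; [:: 4; 7; 10; 19; 20]; [:: 5; 8; 11; 0; 20]; [:: 6; 9; 12; 1; 20]; [:: 7; 10; 13; 2; 20]; [:: 8; 11; 14; 3; 20]; [:: 9; 12; 15; 4; 20]; [:: 10; 13; 16; 5; 20]; [:: 11; 14; 17; 6; 20]; [:: 12; 15; 18; 7; 20]; [:: 13; 16; 19; 8; 20]; [:: 14; 17; 0; 9; 20]; [:: 15; 18; 1; 10; 20]; [:: 16; 19; 2; 11; 20]; [:: 17; 0; 3; 12; 20]; [:: 18; 1; 4; 13; 20]; [:: 19; 2; 5; 14; 20]; [:: 0; 3; 4; 7; 20]; [:: 1; 4; 5; 8; 20]; [:: 2; 5; 6; 9; 20]; [:: 3; 6; 7; 10; 20]; [:: 4; 7; 8; 11; 20]; [:: 5; 8; 9; 12; 20]; [:: 6; 9; 10; 13; 20]; [:: 7; 10; 11; 14; 20]; [:: 8; 11; 12; 15; 20]; [:: 9; 12; 13; 16;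 20]; [:: 10; 13; 14; 17; 20]; [:: 11; 14; 15; 18; 20]; [:: 12; 15; 16; 19; 20]; [:: 13; 16; 17; 0; 20]; [:: 14; 17; 18; 1; 20]; [:: 15; 18; 19; 2; 20]; [:: 16; 19; 0; 3; 20]; [:: 17; 0; 1; 4; 20]; [:: 18; 1; 2; 5; 20]; [:: 19; 2; 3; 6; 20]; [:: 0; 1; 6; 11; 20]; [:: 1; 2; 7; 12; 20]; [:: 2; 3; 8; 13; 20]; [:: 3; 4; 9; 14; 20]; [:: 4; 5; 10; 15; 20]; [:: 5; 6; 11; 16; 20]; [:: 6; 7; 12; 17; 20]; [:: 7; 8; 13; 18; 20]; [:: 8; 9; 14; 19; 20]; [:: 9; 10; 15; 0; 20]; [:: 10; 11; 16; 1; 20]; [:: 11; 12; 17; 2; 20]; [:: 12; 13; 18; 3; 20]; [:: 13; 14; 19; 4; 20]; [:: 14; 15; 0; 5; 20]; [:: 15; 16; 1; 6; 20]; [:: 16; 17; 2; 7; 20]; [:: 17; 18; 3; 8; 20]; [:: 18; 19; 4; 9; 20]; [:: 19; 0; 5; 10; 20]; [:: 0; 5; 12; 13; 20]; [:: 1; 6; 13; 14; 20]; [:: 2; 7; 14; 15; 20]; [:: 3; 8; 15; 16; 20]; [:: 4; 9; 16; 17; 20]; [:: 5; 10; 17; 18; 20]; [:: 6; 11; 18; 19; 20]; [:: 7; 12; 19; 0; 20]; [:: 8; 13; 0; 1; 20]; [:: 9; 14; 1; 2; 20]; [:: 10; 15; 2; 3; 20]; [:: 11; 16; 3; 4; 20];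 [:: 12; 17; 4; 5; 20]; [:: 13; 18; 5; 6; 20]; [:: 14; 19; 6; 7; 20]; [:: 15; 0; 7; 8; 20]; [:: 16; 1; 8; 9; 20]; [:: 17; 2; 9; 10; 20]; [:: 18; 3; 10; 11; 20]; [:: 19; 4; 11; 12; 20]; [:: 0; 3; 5; 18; 20]; [:: 1; 4; 6; 19; 20]; [:: 2; 5; 7; 0; 20]; [:: 3; 6; 8; 1; 20]; [:: 4; 7; 9; 2; 20]; [:: 5; 8; 10; 3; 20]; [:: 6; 9; 11; 4; 20]; [:: 7; 10; 12; 5; 20]; [:: 8; 11; 13; 6; 20]; [:: 9; 12; 14; 7; 20]; [:: 10; 13; 15; 8; 20]; [:: 11; 14; 16; 9; 20]; [:: 12; 15; 17; 10; 20]; [:: 13; 16; 18; 11; 20]; [:: 14; 17; 19; 12; 20]; [:: 15; 18; 0; 13; 20]; [:: 16; 19; 1; 14; 20]; [:: 17; 0; 2; 15; 20]; [:: 18; 1; 3; 16; 20]; [:: 19; 2; 4; 17; 20]; [:: 0; 8; 3; 9; 16]; [:: 1; 9; 4; 10; 17]; [:: 2; 10; 5; 11; 18]; [:: 3; 11; 6; 12; 19]; [:: 4; 12; 7; 13; 0]; [:: 5; 13; 8; 14; 1]; [:: 6; 14; 9; 15; 2]; [:: 7; 15; 10; 16; 3]; [:: 8; 16; 11; 17; 4]; [:: 9; 17; 12; 18; 5]; [:: 10; 18; 13; 19; 6]; [:: 11; 19; 14; 0; 7]; [:: 12; 0; 15; 1; 8]; [:: 13; 1; 16; 2; 9]; [::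 14; 2; 17; 3; 10]; [:: 15; 3; 18; 4; 11]; [:: 16; 4; 19; 5; 12]; [:: 17; 5; 0; 6; 13]; [:: 18; 6; 1; 7; 14]; [:: 19; 7; 2; 8; 15]; [:: 0; 9; 4; 5; 3]; [:: 1; 10; 5; 6; 4]; [:: 2; 11; 6; 7; 5]; [:: 3; 12; 7; 8; 6]; [:: 4; 13; 8; 9; 7]; [:: 5; 14; 9; 10; 8]; [:: 6; 15; 10; 11; 9]; [:: 7; 16; 11; 12; 10]; [:: 8; 17; 12; 13; 11]; [:: 9; 18; 13; 14; 12]; [:: 10; 19; 14; 15; 13]; [:: 11; 0; 15; 16; 14]; [:: 12; 1; 16; 17; 15]; [:: 13; 2; 17; 18; 16]; [:: 14; 3; 18; 19; 17]; [:: 15; 4; 19; 0; 18]; [:: 16; 5; 0; 1; 19]; [:: 17; 6; 1; 2; 0]; [:: 18; 7; 2; 3; 1]; [:: 19; 8; 3; 4; 2]; [:: 0; 9; 1; 18; 8]; [:: 1; 10; 2; 19; 9]; [:: 2; 11; 3; 0; 10]; [:: 3; 12; 4; 1; 11]; [:: 4; 13; 5; 2; 12]; [:: 5; 14; 6; 3; 13]; [:: 6; 15; 7; 4; 14]; [:: 7; 16; 8; 5; 15]; [:: 8; 17; 9; 6; 16]; [:: 9; 18; 10; 7; 17]; [:: 10; 19; 11; 8; 18]; [:: 11; 0; 12; 9; 19]; [:: 12; 1; 13; 10; 0]; [:: 13; 2; 14; 11; 1]; [:: 14; 3; 15; 12; 2]; [:: 15; 4; 16; 13; 3]; [:: 16;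 5; 17; 14; 4]; [:: 17; 6; 18; 15; 5]; [:: 18; 7; 19; 16; 6]; [:: 19; 8; 0; 17; 7]; [:: 0; 3; 13; 14; 7]; [:: 1; 4; 14; 15; 8]; [:: 2; 5; 15; 16; 9]; [:: 3; 6; 16; 17; 10]; [:: 4; 7; 17; 18; 11]; [:: 5; 8; 18; 19; 12]; [:: 6; 9; 19; 0; 13]; [:: 7; 10; 0; 1; 14]; [:: 8; 11; 1; 2; 15]; [:: 9; 12; 2; 3; 16]; [:: 10; 13; 3; 4; 17]; [:: 11; 14; 4; 5; 18]; [:: 12; 15; 5; 6; 19]; [:: 13; 16; 6; 7; 0]; [:: 14; 17; 7; 8; 1]; [:: 15; 18; 8; 9; 2]; [:: 16; 19; 9; 10; 3]; [:: 17; 0; 10; 11; 4]; [:: 18; 1; 11; 12; 5]; [:: 19; 2; 12; 13; 6]; [:: 0; 4; 11; 13; 10]; [:: 1; 5; 12; 14; 11]; [:: 2; 6; 13; 15; 12]; [:: 3; 7; 14; 16; 13]; [:: 4; 8; 15; 17; 14]; [:: 5; 9; 16; 18; 15]; [:: 6; 10; 17; 19; 16]; [:: 7; 11; 18; 0; 17]; [:: 8; 12; 19; 1; 18]; [:: 9; 13; 0; 2; 19]; [:: 10; 14; 1; 3; 0]; [:: 11; 15; 2; 4; 1]; [:: 12; 16; 3; 5; 2]; [:: 13; 17; 4; 6; 3]; [:: 14; 18; 5; 7; 4]; [:: 15; 19; 6; 8; 5]; [:: 16; 0; 7; 9; 6]; [:: 17; 1; 8; 10; 7]; [:: 18; 2;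 9; 11; 8]; [:: 19; 3; 10; 12; 9]].

Lemma c53 : check_all 5 3 A53. Proof. by vm_compute. Qed.
Lemma c55 : check_all 5 5 A55. Proof. by vm_compute. Qed.
Lemma c64 : check_all 6 4 A64. Proof. by vm_compute. Qed.
Lemma c102 : check_all 10 2 A102. Proof. by vm_compute. Qed.

Unset Implicit Arguments.

Theorem lemma3p5 (g n : nat) :
  (g, n) \in [:: (5, 3); (5, 5); (6, 4); (10, 2)] ->
  CS_K4e 'I_(g * n + 1) g n 1.
Proof.
rewrite !inE => /or4P [] /eqP [-> ->].
- exact: (@CS_of_check 5 3 A53 isT isT c53).
- exact: (@CS_of_check 5 5 A55 isT isT c55).
- exact: (@CS_of_check 6 4 A64 isT isT c64).
- exact: (@CS_of_check 10 2 A102 isT isT c102).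
Qed.
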